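(* Let $n\le l$ be positive integers, let $L_l=\{a_1<\dots<a_l\}$ be the linearly ordered semilattice of $l$ elements, and let $t(X)=s(X)$ be an equation over $L_l$ in the variables $X=\{x_1,\dots,x_n\}$ in which every variable occurs. Let $Y=V(t(X)=s(X))\subseteq L_l^n$ be its solution set. Then $Y=\bigcup_{\sigma} Y_\sigma$, where the union is over all permutations $\sigma$ of $\{1,\dots,n\}$ of the first or second kind with respect to $t(X)=s(X)$.
   Context: $L_l$ has multiplication $a_ia_j=a_{\min(i,j)}$. A term is a commutative word in $x_1,\dots,x_n$; $\mathrm{Var}(t)$ is the set of variables occurring in $t$. An equation is an ordered pair of terms $t(X)=s(X)$; $P\in L_l^n$ is a solution if $t(P)=s(P)$; $x\le y$ abbreviates $xy=x$. For a system $S$, $V(S)$ is its set of common solutions. A permutation $\sigma$ of $\{1,\dots,n\}$ is of the first kind if $x_{\sigma(1)}\in\mathrm{Var}(t)\cap\mathrm{Var}(s)$, and of the second kind if $x_{\sigma(1)}\in\mathrm{Var}(s)\setminus\mathrm{Var}(t)$ and $x_{\sigma(2)}\in\mathrm{Var}(t)\setminus\mathrm{Var}(s)$. For $\sigma$ of the first kind, $Y_\sigma=V(\{x_{\sigma(i)}\le x_{\sigma(i+1)}:1\le i\le n-1\})$; for $\sigma$ of the second kind, $Y_\sigma=V(\{x_{\sigma(1)}=x_{\sigma(2)}\}\cup\{x_{\sigma(i)}\le x_{\sigma(i+1)}:2\le i\le n-1\})$. *)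

(* Defs.v *)
From mathcomp Require Import all_boot.
From mathcomp Require Import fingroup perm.
Set Implicit Arguments. Unset Strict Implicit. Unset Printing Implicit Defensive.

(* The semilattice L_l = {a_1 < ... < a_l} is modelled by 'I_l (a_(k+1) <-> k),
   with multiplication a_i a_j = a_(min i j).  Points of L_l^n are functions
   'I_n -> 'I_l (variable x_(i+1) <-> i : 'I_n). *)

(* A commutative word in x_1..x_n : multiplicity of each variable. *)
Definition term (n : nat) := {ffun 'I_n -> nat}.

Definition is_term n (t : term n) : bool := [exists i, 0 < t i].

Definition Var n (t : term n) : {set 'I_n} := [set i | 0 < t i].

Definition tvar n (i : 'I_n) : term n := [ffun j => (j == i) : nat].
Definition tmul n (t s : term n) : term n := [ffun j => t j + s j].

(* value of a term at P in L_l (as the index of the element of L_l):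
   the product of the values of its letters, i.e. their minimum *)
Definition eval n l (t : term n) (P : 'I_n -> 'I_l) : nat :=
  \big[minn/l]_(i | 0 < t i) (P i : nat).

Definition equation n := (term n * term n)%type.

Definition solution n l (e : equation n) (P : 'I_n -> 'I_l) : Prop :=
  eval e.1 P = eval e.2 P.

Definition V n l (S : seq (equation n)) (P : 'I_n -> 'I_l) : Prop :=
  forall e, e \in S -> solution e P.
Arguments V {n} l S P.

(* x_i <= x_j abbreviates x_i x_j = x_i ;  x_i = x_j is the equation itself *)
Definition le_eq n (i j : 'I_n) : equation n := (tmul (tvar i) (tvar j), tvar i).
Definition eq_eq n (i j : 'I_n) : equation n := (tvar i, tvar j).

(* Below, positions 1..n of the paper are 0..n-1. *)

Definition first_kind n (t s : term n) (sg : {perm 'I_n}) : bool :=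
  [exists i : 'I_n, (val i == 0) && (sg i \in Var t) && (sg i \in Var s)].

Definition second_kind n (t s : term n) (sg : {perm 'I_n}) : bool :=
  [exists i : 'I_n, exists j : 'I_n,
     [&& val i == 0, val j == 1,
         sg i \in Var s :\: Var t & sg j \in Var t :\: Var s]].

(* {x_sg(i) <= x_sg(i+1) : k <= i <= n-1} (paper indexing, here 0-based k-1) *)
Definition chain n (k : nat) (sg : {perm 'I_n}) : seq (equation n) :=
  [seq le_eq (sg i) (sg j) | i <- enum 'I_n, j <- [seq j <- enum 'I_n | (k <= val i) && (val j == (val i).+1)]].

Definition Y1 n l (sg : {perm 'I_n}) : ('I_n -> 'I_l) -> Prop := V l (chain 0 sg).
Arguments Y1 {n} l sg P.

Definition Y2 n l (sg : {perm 'I_n}) : ('I_n -> 'I_l) -> Prop :=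
  V l ([seq eq_eq (sg i) (sg j) | i <- enum 'I_n, j <- [seq j <- enum 'I_n | (val i == 0) && (val j == 1)]]
       ++ chain 1 sg).
Arguments Y2 {n} l sg P.

(* Main.v *)
Require Import Defs.
From mathcomp Require Import all_boot.
From mathcomp Require Import fingroup perm.
From mathcomp Require Import zify.

Lemma big_min_le (I : eqType) (r : seq I) (Q : pred I) (F : I -> nat) l x :
  x \in r -> Q x -> \big[minn/l]_(i <- r | Q i) F i <= F x.
Proof.
elim: r => // y r IH; rewrite inE big_cons => /orP[/eqP<-|xr] Qx.
  by rewrite Qx geq_minl.
case: ifP => _; last exact: IH.
by rewrite geq_min IH ?orbT.
Qed.

Lemma big_min_ge (I : Type) (r : seq I) (Q : pred I) (F : I -> nat) l c :
  c <= l -> (forall i, Q i -> c <= F i) -> c <= \big[minn/l]_(i <- r | Q i) F i.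
Proof.
move=> hl hF; apply: (big_ind (fun v => c <= v)) => //.
  by move=> a b ha hb; rewrite leq_min ha hb.
Qed.

Lemma big_min_ex (I : Type) (r : seq I) (Q : pred I) (F : I -> nat) l :
  let v := \big[minn/l]_(i <- r | Q i) F i in
  v = l \/ exists2 i, Q i & v = F i.
Proof.
apply: (big_ind (fun v => v = l \/ exists2 i, Q i & v = F i)); first by left.
  move=> a b ha hb /=; case: (leqP a b) => hab.
    by [].
  by [].
by move=> i Qi; right; exists i.
Qed.

Lemma eval_le n l (t : term n) (P : 'I_n -> 'I_l) x :
  x \in Var t -> eval t P <= P x.
Proof. by rewrite inE => hx; apply: big_min_le => //; rewrite mem_index_enum. Qed.

Lemma eval_ge n l (t : term n) (P : 'I_n -> 'I_l) c :
  c <= l -> (forall i, i \in Var t -> c <= P i) -> c <= eval t P.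
Proof. by move=> hl h; apply: big_min_ge => // i hi; apply: h; rewrite inE. Qed.

Lemma eval_ex n l (t : term n) (P : 'I_n -> 'I_l) :
  is_term t -> exists2 x, x \in Var t & eval t P = P x.
Proof.
move=> /existsP[y hy].
have hle : eval t P <= P y by apply: eval_le; rewrite inE.
case: (@big_min_ex 'I_n (index_enum 'I_n) (fun i => 0 < t i) (fun i => (P i : nat)) l) => [e|[x hx e]].
  by move: hle; rewrite /eval e => h; have := leq_ltn_trans h (ltn_ord (P y)); rewrite ltnn.
by exists x; rewrite ?inE.
Qed.

Lemma sort_perm n (P : 'I_n -> nat) (a b : 'I_n)
  (Ha : forall j, P a <= P j) (Hb : forall j, j != a -> P b <= P j) :
  exists sg : {perm 'I_n},
   [/\ forall k k' : 'I_n, val k' = (val k).+1 -> P (sg k) <= P (sg k'),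
       forall k : 'I_n, val k = 0 -> sg k = a &
       forall k : 'I_n, val k = 1 -> a != b -> sg k = b].
Proof.
pose w (i : 'I_n) : nat := if i == a then 0 else if i == b then 1 else (val i).+2.
have winj : injective w.
  move=> i j; rewrite /w.
  case: (eqVneq i a) => ia; case: (eqVneq j a) => ja;
  case: (eqVneq i b) => ib; case: (eqVneq j b) => jb => //= h;
  by [congruence | apply: val_inj; case: h].
pose r := fun i j : 'I_n => (P i < P j) || ((P i == P j) && (w i <= w j)).
have r_tot : total r by move=> i j; rewrite /r; lia.
have r_tr : transitive r by move=> i j k; rewrite /r; lia.
have r_refl : reflexive r by move=> i; rewrite /r; lia.
have r_anti : forall i j, r i j -> r j i -> i = j.
  by move=> i j; rewrite /r => h1 h2; apply: winj; lia.
have rP : forall i j, r i j -> P i <= P j by move=> i j; rewrite /r; lia.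
pose s0 := sort r (enum 'I_n).
have pe : perm_eq s0 (enum 'I_n) by rewrite perm_sort.
have us0 : uniq s0 by rewrite (perm_uniq pe) enum_uniq.
have ss0 : size s0 = n by rewrite (perm_size pe) size_enum_ord.
have ms0 : forall i, i \in s0 by move=> i; rewrite (perm_mem pe) mem_enum.
have so : sorted r s0 by apply: sort_sorted.
have hle := sorted_leq_nth r_tr r_refl a so.
pose f (k : 'I_n) : 'I_n := nth a s0 k.
have finj : injective f.
  move=> i j /eqP; rewrite /f nth_uniq ?ss0 // => /eqP; exact: val_inj.
exists (perm finj).
have nth_ix : forall i, nth a s0 (index i s0) = i by move=> i; rewrite nth_index.
have ix_lt : forall i, index i s0 < n by move=> i; rewrite -[X in _ < X]ss0 index_mem.
have h0 : forall k : 'I_n, val k = 0 -> f k = a.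
  move=> k k0; apply: r_anti.
    rewrite /f k0 -{2}(nth_ix a); apply: hle; rewrite ?inE ?ss0 //.
    by rewrite -k0 ltn_ord.
  rewrite /r; set c := f k.
  case: (eqVneq c a) => [->|ca]; first exact: r_refl.
  have := Ha c; rewrite /w eqxx; lia.
split.
- move=> k k' kk'; rewrite !permE; apply: rP; rewrite /f; apply: hle;
    rewrite ?inE ?ss0 ?ltn_ord //; by move: kk' => /= ->.
- by move=> k k0; rewrite permE h0.
- move=> k k1 ab; rewrite permE.
  have n1 : 0 < n by move: (ltn_ord k); lia.
  have fka : f k != a.
    apply/negP => /eqP e.
    have : f k = f (Ordinal n1) by rewrite e h0.
    by move/finj/(congr1 val) => /=; rewrite k1.
  apply: r_anti.
    have ib : index b s0 != 0.
      apply/negP=> /eqP e; have := nth_ix b; rewrite e.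
      have <- : f (Ordinal n1) = nth a s0 0 by [].
      by rewrite h0 // => ba; rewrite ba eqxx in ab.
    rewrite /f k1 -[X in r _ X](nth_ix b); apply: hle; rewrite ?inE ?ss0 //.
      by rewrite -k1 ltn_ord.
    lia.
  have ba : (b == a) = false by apply/eqP => e; rewrite e eqxx in ab.
  rewrite /r; have := Hb _ fka; rewrite /w eqxx (negbTE fka) ba.
  case: (f k == b); lia.
Qed.

Lemma Var_tvar n (i j : 'I_n) : (j \in Var (tvar i)) = (j == i).
Proof. by rewrite inE ffunE; case: (j == i). Qed.

Lemma Var_tmul n (t s : term n) j : (j \in Var (tmul t s)) = (j \in Var t) || (j \in Var s).
Proof. by rewrite !inE ffunE addn_gt0. Qed.

Lemma eval_eq n l (t : term n) (P : 'I_n -> 'I_l) x :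
  x \in Var t -> (forall y, y \in Var t -> P x <= P y) -> eval t P = P x.
Proof.
move=> hx hy; apply/eqP; rewrite eqn_leq eval_le //=.
by apply: eval_ge => //; apply: ltnW.
Qed.

Lemma eval_tvar n l (P : 'I_n -> 'I_l) i : eval (tvar i) P = P i.
Proof. by apply: eval_eq; rewrite ?Var_tvar // => y; rewrite Var_tvar => /eqP->. Qed.

Lemma eval_le_eq n l (P : 'I_n -> 'I_l) a b :
  solution (le_eq a b) P <-> P a <= P b.
Proof.
rewrite /solution /= eval_tvar.
case: (leqP (P a) (P b)) => h.
  split=> // _; apply: eval_eq; first by rewrite Var_tmul Var_tvar eqxx.
  by move=> y; rewrite Var_tmul !Var_tvar => /orP[]/eqP->.
rewrite (@eval_eq _ _ _ _ b).
- by split=> [e|//]; move: h; rewrite e ltnn.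
- by rewrite Var_tmul !Var_tvar eqxx orbT.
- by move=> y; rewrite Var_tmul !Var_tvar => /orP[]/eqP->; rewrite // ltnW.
Qed.

Lemma chain_iff n l k0 (sg : {perm 'I_n}) (P : 'I_n -> 'I_l) :
  V l (chain k0 sg) P <->
  (forall i j : 'I_n, k0 <= val i -> val j = (val i).+1 -> P (sg i) <= P (sg j)).
Proof.
split.
  move=> hV i j hi hj; apply/eval_le_eq; apply: hV.
  apply/allpairsPdep; exists i, j; split; rewrite ?mem_enum //.
  by rewrite mem_filter mem_enum hi hj eqxx.
move=> h e /allpairsPdep [i [j [_ hj ->]]].
move: hj; rewrite mem_filter => /andP[/andP[hi /eqP hj] _].
by apply/eval_le_eq; apply: h.
Qed.

Lemma chain_trans n (Q : 'I_n -> nat) k0 :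
  (forall i j : 'I_n, k0 <= val i -> val j = (val i).+1 -> Q i <= Q j) ->
  forall i j : 'I_n, k0 <= val i -> val i <= val j -> Q i <= Q j.
Proof.
move=> h i j hi hij.
have : exists m, val j = val i + m by exists (val j - val i); lia.
case=> m; elim: m j {hij} => [|m IH] j hj.
  by rewrite addn0 in hj; rewrite (val_inj hj).
have hm : val i + m < n by move: (ltn_ord j) hj; rewrite /=; lia.
apply: leq_trans (IH (Ordinal hm) erefl) _.
apply: h => /=; move: hj hi; rewrite /=; lia.
Qed.

Theorem lemma2 (n l : nat) (hn : 0 < n) (hnl : n <= l) (t s : term n)
  (ht : is_term t) (hs : is_term s)
  (hall : forall i : 'I_n, i \in Var t :|: Var s) :
  forall P : 'I_n -> 'I_l,
    V l [:: (t, s)] P <->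
    exists sg : {perm 'I_n},
      (first_kind t s sg /\ Y1 l sg P) \/ (second_kind t s sg /\ Y2 l sg P).
Proof.
move=> P; split.
- move=> hV; have e : eval t P = eval s P by apply: (hV (t, s)); rewrite mem_head.
  have [xt xtV xte] := @eval_ex _ _ t P ht; have [xs xsV xse] := @eval_ex _ _ s P hs.
  have hmin : forall j, eval t P <= P j.
    move=> j; have := hall j; rewrite inE => /orP[hj|hj]; first exact: eval_le.
    by rewrite e; apply: eval_le.
  case: (pickP (fun c => [&& c \in Var t, c \in Var s & (P c : nat) == eval t P])) =>
    [c /and3P[ct cs /eqP ce] | none].
  + have Ha : forall j, (fun i => (P i : nat)) c <= P j by move=> j /=; rewrite ce.
    have [sg [hs1 h0 _]] := @sort_perm _ _ _ _ Ha (fun j _ => Ha j).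
    exists sg; left; split.
      by apply/existsP; exists (Ordinal hn); rewrite h0 // eqxx ct cs.
    by apply/chain_iff => i j _ ij; apply: hs1.
  + have nxt : xs \notin Var t.
      by apply/negP => h; have := none xs; rewrite h xsV e xse eqxx.
    have nxs : xt \notin Var s.
      by apply/negP => h; have := none xt; rewrite h xtV xte eqxx.
    have ab : xs != xt by apply/eqP => E; rewrite -E xsV in nxs.
    have n1 : 1 < n.
      rewrite ltnNge; apply/negP => h; move/eqP: ab; apply; apply: val_inj.
      move: (ltn_ord xs) (ltn_ord xt) h; rewrite /=; lia.
    have Ha : forall j, (fun i => (P i : nat)) xs <= P j by move=> j /=; rewrite -xse -e.
    have Hb : forall j, j != xs -> (fun i => (P i : nat)) xt <= P j by move=> j _ /=; rewrite -xte.
    have [sg [hs1 h0 h1]] := @sort_perm _ _ _ _ Ha Hb.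
    exists sg; right; split.
      apply/existsP; exists (Ordinal hn); apply/existsP; exists (Ordinal n1).
      rewrite /= h0 // h1 //. by rewrite !in_setD xsV xtV nxt nxs.
    move=> e'; rewrite mem_cat => /orP[he|he].
      move/allpairsPdep: he => [i [j [_ jin ->]]].
      move: jin; rewrite mem_filter => /andP[/andP[/eqP i0 /eqP j1] _].
      by rewrite /solution /= !eval_tvar h0 // h1 // -xse -xte e.
    by move: e' he; apply/chain_iff => i j _ ij; apply: hs1.
- have key : forall (sg : {perm 'I_n}) c, (forall k, P (sg c) <= P (sg k)) ->
    sg c \in Var t -> forall d, (P (sg d) : nat) = P (sg c) -> sg d \in Var s ->
    V l [:: (t, s)] P.
    move=> sg c hc ct d dc ds e; rewrite inE => /eqP ->; rewrite /solution /=.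
    have hc' : forall y, P (sg c) <= P y by move=> y; rewrite -(permKV sg y).
    rewrite (@eval_eq _ _ t P _ ct) ?(@eval_eq _ _ s P _ ds) // => y _; rewrite dc //.
  case=> sg [[hk hY]|[hk hY]].
  + move/existsP: hk => [i /andP[/andP[/eqP i0 iT] iS]].
    move/chain_iff: hY => hY.
    have hc : forall k, P (sg i) <= P (sg k).
      move=> k; apply: (@chain_trans _ (fun k => (P (sg k) : nat)) _ hY) => //.
      by rewrite i0.
    exact: (key sg i hc iT i erefl iS).
  + move/existsP: hk => [i /existsP[j /and4P[/eqP i0 /eqP j1 iS iT]]].
    move: iS iT; rewrite !in_setD => /andP[_ iS] /andP[_ iT].
    have hY1 : V l (chain 1 sg) P by move=> e he; apply: hY; rewrite mem_cat he orbT.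
    move/chain_iff: hY1 => hY1.
    have hij : (P (sg i) : nat) = P (sg j).
      have := hY (eq_eq (sg i) (sg j)); rewrite mem_cat /solution /= !eval_tvar; apply.
      apply/orP; left; apply/allpairsPdep; exists i, j; split; rewrite ?mem_enum //.
      by rewrite mem_filter mem_enum i0 j1 !eqxx.
    have hc : forall k, P (sg j) <= P (sg k).
      move=> k; case: (posnP (val k)) => hk.
        by rewrite -hij (_ : k = i) //; apply: val_inj; rewrite hk i0.
      apply: (@chain_trans _ (fun k => (P (sg k) : nat)) _ hY1); rewrite ?j1 //.
    exact: (key sg j hc iT i hij iS).
Qed.
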